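(* Let $A$ be an algebra which is not $q_\omega$-compact. Then $\mathrm{pvar}(A)_\omega\neq \mathrm{qvar}(A)_\omega$, i.e. the class of finitely generated algebras in the prevariety generated by $A$ differs from the class of finitely generated algebras in the quasivariety generated by $A$. Moreover, there exists an ultrapower $B$ of $A$ that is not geometrically equivalent to $A$.
   Context: Let $\mathcal{V}=\mathrm{var}(A)$; for $n\geq1$, $X_n=\{x_1,\dots,x_n\}$ and $F_{\mathcal{V}}(X_n)$ is the relatively free algebra of $\mathcal{V}$ on $X_n$. For an algebra $D\in\mathcal{V}$ and $S\subseteq F_{\mathcal{V}}(X_n)^2$, $\mathrm{Rad}_D(S)$ is the set of all $(p,q)\in F_{\mathcal{V}}(X_n)^2$ such that every $d\in D^n$ with $p'(d)=q'(d)$ for all $(p',q')\in S$ also satisfies $p(d)=q(d)$. $A$ is $q_\omega$-compact if for every $n$, every $S\subseteq F_{\mathcal{V}}(X_n)^2$ and every $(p,q)\in\mathrm{Rad}_A(S)$ there is a finite $S_0\subseteq S$ with $(p,q)\in\mathrm{Rad}_A(S_0)$. A prevariety is a class closed under isomorphic copies, direct products and subalgebras; a quasivariety is a class axiomatized by quasi-identities (equivalently closed under isomorphic copies, subalgebras, direct products and ultraproducts). $\mathrm{pvar}(A)$ and $\mathrm{qvar}(A)$ are the smallest prevariety and quasivariety containing $A$; for a class $\mathfrak{X}$, $\mathfrak{X}_\omega$ is its subclass of finitely generated algebras. $A$ and $B$ are geometrically equivalent if $\mathrm{Rad}_A(S)=\mathrm{Rad}_B(S)$ for all $n$ and all $S\subseteq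 F_{\mathcal{V}}(X_n)^2$. *)

(* Defs.v *)
From Stdlib Require List.
From mathcomp Require Import all_boot.
Set Implicit Arguments. Unset Strict Implicit. Unset Printing Implicit Defensive.

Record signature := Signature { fsym : Type; arity : fsym -> nat }.

Record algebra (sg : signature) := Algebra {
  carrier :> Type;
  op : forall f : fsym sg, ('I_(arity f) -> carrier) -> carrier }.
Arguments op {sg} _ f _.

Inductive term (sg : signature) (n : nat) : Type :=
| Var : 'I_n -> term sg n
| App : forall f : fsym sg, ('I_(arity f) -> term sg n) -> term sg n.

Fixpoint eval {sg : signature} {n : nat} (A : algebra sg) (d : 'I_n -> A)
  (t : term sg n) {struct t} : A :=
  match t with
  | Var i => d i
  | App f ts => op A f (fun k => @eval sg n A d (ts k))
  end.
Arguments eval {sg n} A d t.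

Definition Rad (sg : signature) (n : nat) (D : algebra sg)
  (S : term sg n * term sg n -> Prop) (pq : term sg n * term sg n) : Prop :=
  forall d : 'I_n -> D,
    (forall pq', S pq' -> eval D d pq'.1 = eval D d pq'.2) ->
    eval D d pq.1 = eval D d pq.2.

Definition qw_compact (sg : signature) (A : algebra sg) : Prop :=
  forall (n : nat), 0 < n ->
  forall (S : term sg n * term sg n -> Prop) (pq : term sg n * term sg n),
    Rad A S pq ->
    exists S0 : seq (term sg n * term sg n),
      (forall x, List.In x S0 -> S x) /\ Rad A (fun x => List.In x S0) pq.

Definition geom_equiv (sg : signature) (A B : algebra sg) : Prop :=
  forall (n : nat), 0 < n ->
  forall (S : term sg n * term sg n -> Prop) (pq : term sg n * term sg n),
    Rad A S pq <-> Rad B S pq.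

Definition is_hom (sg : signature) (A B : algebra sg) (h : A -> B) : Prop :=
  forall (f : fsym sg) (a : 'I_(arity f) -> A), h (op A f a) = op B f (fun k => h (a k)).

Definition isomorphic (sg : signature) (A B : algebra sg) : Prop :=
  exists h : A -> B, is_hom h /\ bijective h.

Definition prod_alg (sg : signature) (I : Type) (Ai : I -> algebra sg) : algebra sg :=
  @Algebra sg (forall i : I, Ai i)
    (fun f a => fun i => op (Ai i) f (fun k => a k i)).

Definition power_alg (sg : signature) (A : algebra sg) (I : Type) : algebra sg :=
  prod_alg (fun _ : I => A).

Definition op_closed (sg : signature) (B : algebra sg) (P : B -> Prop) : Prop :=
  forall (f : fsym sg) (a : 'I_(arity f) -> B), (forall k, P (a k)) -> P (op B f a).

Definition sub_alg (sg : signature) (B : algebra sg) (P : B -> Prop)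
  (HP : op_closed P) : algebra sg :=
  @Algebra sg {x : B | P x}
    (fun f a => exist P (op B f (fun k => proj1_sig (a k)))
                        (HP f _ (fun k => proj2_sig (a k)))).

Definition is_prevariety (sg : signature) (K : algebra sg -> Prop) : Prop :=
  [/\ (forall B C : algebra sg, isomorphic B C -> K B -> K C),
      (forall (I : Type) (Ai : I -> algebra sg), (forall i, K (Ai i)) -> K (prod_alg Ai))
    & (forall (B : algebra sg) (P : B -> Prop) (HP : op_closed P), K B -> K (sub_alg HP))].

Definition pvar (sg : signature) (A : algebra sg) (D : algebra sg) : Prop :=
  forall K : algebra sg -> Prop, is_prevariety K -> K A -> K D.

Definition sat_qi (sg : signature) (D : algebra sg) (n : nat)
  (prem : seq (term sg n * term sg n)) (pq : term sg n * term sg n) : Prop :=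
  forall d : 'I_n -> D,
    (forall x, List.In x prem -> eval D d x.1 = eval D d x.2) ->
    eval D d pq.1 = eval D d pq.2.

(* qvar(A): the class axiomatized by all quasi-identities true in A
   (= the smallest quasivariety containing A) *)
Definition qvar (sg : signature) (A : algebra sg) (D : algebra sg) : Prop :=
  forall (n : nat) (prem : seq (term sg n * term sg n)) (pq : term sg n * term sg n),
    sat_qi A prem pq -> sat_qi D prem pq.

Definition fin_generated (sg : signature) (D : algebra sg) : Prop :=
  exists (n : nat) (g : 'I_n -> D), forall x : D, exists t : term sg n, eval D g t = x.

Definition ultrafilter (I : Type) (U : (I -> Prop) -> Prop) : Prop :=
  [/\ U (fun _ => True), ~ U (fun _ => False),
      (forall X Y : I -> Prop, U X -> (forall i, X i -> Y i) -> U Y),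
      (forall X Y : I -> Prop, U X -> U Y -> U (fun i => X i /\ Y i))
    & (forall X : I -> Prop, U X \/ U (fun i => ~ X i))].

(* B is (isomorphic to) the ultrapower A^I/U: there is a surjective
   homomorphism A^I -> B whose kernel is exactly the U-equivalence. *)
Definition is_ultrapower (sg : signature) (A B : algebra sg) : Prop :=
  exists (I : Type) (U : (I -> Prop) -> Prop), ultrafilter U /\
  exists h : power_alg A I -> B,
    [/\ is_hom h, (forall y : B, exists x, h x = y)
      & (forall x y : power_alg A I, h x = h y <-> U (fun i => x i = y i))].

(* Main.v *)
Require Import Defs.
From mathcomp Require Import all_boot.
From mathcomp Require Import boolp classical_sets filter.
From Stdlib Require Import ClassicalEpsilon ProofIrrelevance FunctionalExtensionality Classical.
Set Implicit Arguments. Unset Strict Implicit. Unset Printing Implicit Defensive.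
Lemma exists_ultra (I : Type) (Bc : I -> I -> Prop) : I ->
  (forall i, exists x, Bc i x) ->
  (forall i j, exists k, forall x, Bc k x -> Bc i x /\ Bc j x) ->
  exists U : (I -> Prop) -> Prop,
   [/\ U (fun _ => True), ~ U (fun _ => False),
      (forall X Y : I -> Prop, U X -> (forall i, X i -> Y i) -> U Y),
      (forall X Y : I -> Prop, U X -> U Y -> U (fun i => X i /\ Y i))
    & (forall X : I -> Prop, U X \/ U (fun i => ~ X i))] /\ forall i, U (Bc i).
Proof.
move=> i0 ne dir.
have FF : Filter (filter_from setT Bc).
  apply: filter_fromT_filter; first by exists i0.
  by move=> i j; have [k Hk] := dir i j; exists k => x /Hk.
have PF : ProperFilter (filter_from setT Bc).
  apply: filter_from_proper => i _; exact: ne.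
have [G [GU sFG]] := ultraFilterLemma PF.
exists G; split; last by move=> i; apply: sFG; exists i.
have GP : ProperFilter G by apply: ultra_proper.
split.
- exact: (@filterT _ G).
- exact: (@filter_not_empty _ G).
- move=> X Y GX XY; exact: (@filterS _ G _ X Y XY GX).
- move=> X Y GX GY; exact: (@filterI _ G _ X Y GX GY).
- move=> X; exact: (@in_ultra_setVsetC _ G X GU).
Qed.

Lemma sig_eqP (T : Type) (P : T -> Prop) (x y : {z : T | P z}) :
  proj1_sig x = proj1_sig y -> x = y.
Proof.
case: x => x px; case: y => y py /= E; subst y; f_equal; apply: proof_irrelevance.
Qed.

Lemma eval_hom (sg : signature) (A B : algebra sg) (h : A -> B) n (d : 'I_n -> A) t :
  is_hom h -> eval B (fun j => h (d j)) t = h (eval A d t).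
Proof.
move=> hh; elim: t => [j|f ts IH] //=.
rewrite hh; congr (op B f); apply: functional_extensionality => k; exact: IH.
Qed.

Lemma eval_prod (sg : signature) (I : Type) (Ai : I -> algebra sg) n
  (d : 'I_n -> prod_alg Ai) t i :
  eval (prod_alg Ai) d t i = eval (Ai i) (fun j => d j i) t.
Proof.
elim: t => [j|f ts IH] //=.
congr (op (Ai i) f); apply: functional_extensionality => k; exact: IH.
Qed.

Lemma eval_sub (sg : signature) (B : algebra sg) (P : B -> Prop) (HP : op_closed P)
  n (d : 'I_n -> sub_alg HP) t :
  proj1_sig (eval (sub_alg HP) d t) = eval B (fun j => proj1_sig (d j)) t.
Proof.
elim: t => [j|f ts IH] //=.
congr (op B f); apply: functional_extensionality => k; exact: IH.
Qed.

Definition Kq (sg : signature) (A D : algebra sg) : Prop :=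
  forall n (S : term sg n * term sg n -> Prop) pq, Rad A S pq -> Rad D S pq.

Lemma Kq_prevariety (sg : signature) (A : algebra sg) : is_prevariety (Kq A).
Proof.
split.
- move=> B C [h [hh [g gh hg]]] KB n S pq RA d HS.
  have E : forall t, eval C d t = h (eval B (fun j => g (d j)) t).
    move=> t; rewrite -eval_hom //; congr (eval C _ t).
    by apply: functional_extensionality => j; rewrite hg.
  rewrite !E; congr h; apply: (KB n S pq RA) => pq' Spq'.
  have := HS pq' Spq'; rewrite !E => /(f_equal g); rewrite !gh //.
- move=> I Ai KA n S pq RA d HS; apply: functional_extensionality_dep => i.
  rewrite !eval_prod; apply: (KA i n S pq RA) => pq' Spq'.
  by have := HS pq' Spq' => /(f_equal (fun x => x i)); rewrite !eval_prod.
- move=> B P HP KB n S pq RA d HS; apply: sig_eqP; rewrite !eval_sub.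
  apply: (KB n S pq RA) => pq' Spq'.
  by have := HS pq' Spq' => /(f_equal (@proj1_sig _ _)); rewrite !eval_sub.
Qed.

Lemma inP (T : eqType) (x : T) (s : seq T) : x \in s -> List.In x s.
Proof.
elim: s => //= a s IH; rewrite in_cons => /orP [/eqP ->|/IH]; auto.
Qed.

Lemma U_list (I T : Type) (U : (I -> Prop) -> Prop) :
  ultrafilter U -> forall (l : list T) (X : T -> I -> Prop),
  (forall t, List.In t l -> U (X t)) -> U (fun i => forall t, List.In t l -> X t i).
Proof.
case=> UT _ US UI _; elim=> [|a l IH] X H.
  by apply: (US _ _ UT) => i _ t [].
apply: (US _ _ (UI _ _ (H a (or_introl erefl)) (IH X (fun t Ht => H t (or_intror Ht))))).
by move=> i [Ha Hl] t /= [<-|Ht]; auto.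
Qed.

Lemma U_ord (I : Type) (U : (I -> Prop) -> Prop) :
  ultrafilter U -> forall (m : nat) (X : 'I_m -> I -> Prop),
  (forall t, U (X t)) -> U (fun i => forall t, X t i).
Proof.
move=> UU m X H; case: (UU) => _ _ US _ _.
apply: (US _ _ (@U_list I 'I_m U UU (enum 'I_m) X (fun t _ => H t))).
by move=> i Hi t; apply: Hi; apply: inP; rewrite mem_enum.
Qed.

Definition ueq (sg : signature) (A : algebra sg) (I : Type) (U : (I -> Prop) -> Prop)
  (x y : I -> A) : Prop := U (fun i => x i = y i).

Definition UPcar (sg : signature) (A : algebra sg) (I : Type) (U : (I -> Prop) -> Prop) :=
  {P : (I -> A) -> Prop | exists x, P = ueq U x}.

Definition cls (sg : signature) (A : algebra sg) (I : Type) (U : (I -> Prop) -> Prop)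
  (x : I -> A) : UPcar A U := exist _ (ueq U x) (ex_intro _ x erefl).

Definition rep (sg : signature) (A : algebra sg) (I : Type) (U : (I -> Prop) -> Prop)
  (b : UPcar A U) : I -> A :=
  proj1_sig (constructive_indefinite_description _ (proj2_sig b)).

Lemma cls_rep (sg : signature) (A : algebra sg) (I : Type) (U : (I -> Prop) -> Prop)
  (b : UPcar A U) : cls U (rep b) = b.
Proof.
apply: sig_eqP => /=; rewrite /rep.
case: (constructive_indefinite_description _ _) => x /= ->; done.
Qed.

Lemma cls_eq (sg : signature) (A : algebra sg) (I : Type) (U : (I -> Prop) -> Prop)
  (UU : ultrafilter U) (x y : I -> A) : cls U x = cls U y <-> ueq U x y.
Proof.
case: (UU) => UT _ US UI _.
have refl : forall z : I -> A, ueq U z z by move=> z; apply: (US _ _ UT).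
have sym : forall z w : I -> A, ueq U z w -> ueq U w z.
  by move=> z w H; apply: (US _ _ H).
have trans : forall z w v : I -> A, ueq U z w -> ueq U w v -> ueq U z v.
  by move=> z w v H1 H2; apply: (US _ _ (UI _ _ H1 H2)) => i [-> ->].
split.
- move/(f_equal (@proj1_sig _ _)) => /= E.
  by rewrite E; apply: refl.
- move=> H; apply: sig_eqP => /=; apply: functional_extensionality => z.
  apply: propositional_extensionality; split; [apply: trans; exact: sym | exact: trans].
Qed.

Definition UP (sg : signature) (A : algebra sg) (I : Type) (U : (I -> Prop) -> Prop)
  : algebra sg :=
  @Algebra sg (UPcar A U)
    (fun f a => cls U (op (power_alg A I) f (fun k => rep (a k)))).

Lemma cls_hom (sg : signature) (A : algebra sg) (I : Type) (U : (I -> Prop) -> Prop)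
  (UU : ultrafilter U) : @is_hom sg (power_alg A I) (UP A U) (@cls sg A I U).
Proof.
move=> f a /=; apply/(cls_eq UU).
have H : forall k, ueq U (a k) (rep (cls U (a k))).
  by move=> k; apply/(cls_eq UU); rewrite cls_rep.
case: (UU) => _ _ US _ _.
apply: (US _ _ (U_ord UU H)) => i Hi /=; congr (op A f).
by apply: functional_extensionality => k; apply: Hi.
Qed.

Lemma eval_UP (sg : signature) (A : algebra sg) (I : Type) (U : (I -> Prop) -> Prop)
  (UU : ultrafilter U) n (x : 'I_n -> I -> A) t :
  eval (UP A U) (fun j => cls U (x j)) t = cls U (fun i => eval A (fun j => x j i) t).
Proof.
rewrite (@eval_hom sg (power_alg A I) (UP A U) (@cls sg A I U) n x t (cls_hom UU)).
congr (cls U _); apply: functional_extensionality => i.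
exact: (@eval_prod sg I (fun _ => A)).
Qed.

Theorem mainTheorem4 (sg : signature) (A : algebra sg) :
  ~ qw_compact A ->
  ~ (forall D : algebra sg,
        (pvar A D /\ fin_generated D) <-> (qvar A D /\ fin_generated D)) /\
  exists B : algebra sg, is_ultrapower A B /\ ~ geom_equiv A B.
Proof.
move=> nc.
have [n [n0 [S [pq [RA nR]]]]] : exists n, 0 < n /\ exists S pq, Rad A S pq /\
    forall S0 : seq (term sg n * term sg n),
      (forall x, List.In x S0 -> S x) -> ~ Rad A (fun x => List.In x S0) pq.
  apply: NNPP => H; apply: nc => n n0 S pq RA; apply: NNPP => H2; apply: H.
  exists n; split => //; exists S, pq; split => // S0 HS0 RS0; apply: H2.
  by exists S0; split.
pose I := {s : seq (term sg n * term sg n) | forall x, List.In x s -> S x}.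
have wit : forall i : I, exists d : 'I_n -> A,
    (forall x, List.In x (proj1_sig i) -> eval A d x.1 = eval A d x.2) /\
    eval A d pq.1 <> eval A d pq.2.
  move=> [s Hs]; apply: NNPP => H; apply: (nR s Hs) => d Hd; apply: NNPP => Hn.
  by apply: H; exists d; split.
pose w i := proj1_sig (constructive_indefinite_description _ (wit i)).
have wP : forall i, (forall x, List.In x (proj1_sig i) -> eval A (w i) x.1 = eval A (w i) x.2) /\
    eval A (w i) pq.1 <> eval A (w i) pq.2.
  move=> i; exact: (proj2_sig (constructive_indefinite_description _ (wit i))).
pose Bc (i j : I) := forall x, List.In x (proj1_sig i) -> List.In x (proj1_sig j).
have i0 : I by exists [::] => x [].
have ne : forall i, exists x, Bc i x by move=> i; exists i.
have dir : forall i j, exists k, forall x, Bc k x -> Bc i x /\ Bc j x.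
  move=> [s Hs] [t Ht].
  have Hst : forall x, List.In x (s ++ t) -> S x.
    by move=> x Hx; case: (List.in_app_or _ _ _ Hx); [apply: Hs|apply: Ht].
  exists (exist _ (s ++ t) Hst) => x Hx; split => y Hy; apply: Hx => /=;
    apply: List.in_or_app; auto.
have [U [UU Ucone]] := exists_ultra i0 ne dir.
have UUf : ultrafilter U := UU.
case: (UU) => UT UF US UI _.
pose B := UP A U.
pose dB j : B := cls U (fun i => w i j).
have evB : forall t, eval B dB t = cls U (fun i => eval A (w i) t).
  by move=> t; exact: (eval_UP UUf (fun j i => w i j) t).
have HS : forall pq', S pq' -> eval B dB pq'.1 = eval B dB pq'.2.
  move=> pq' Spq'; rewrite !evB; apply/(cls_eq UUf).
  have H1 : forall x, List.In x [:: pq'] -> S x by move=> x [<-|[]].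
  apply: (US _ _ (Ucone (exist _ [:: pq'] H1))) => i Hi.
  by apply: (proj1 (wP i)); apply: Hi; left.
have Hpq : eval B dB pq.1 <> eval B dB pq.2.
  rewrite !evB => /(cls_eq UUf) H; apply: UF; apply: (US _ _ H) => i Hi.
  exact: (proj2 (wP i) Hi).
split; last first.
  exists B; split.
    exists I, U; split => //; exists (@cls sg A I U); split.
    - exact: cls_hom.
    - by move=> y; exists (rep y); exact: cls_rep.
    - exact: cls_eq.
  move=> GE; apply: Hpq; apply: (proj1 (GE n n0 S pq) RA) => pq' Hpq'; exact: HS.
pose P := fun x : B => exists t, eval B dB t = x.
have HP : op_closed P.
  move=> f a Ha.
  have [ts Hts] : exists ts : 'I_(arity f) -> term sg n, forall k, eval B dB (ts k) = a k.
    exists (fun k => proj1_sig (constructive_indefinite_description _ (Ha k))) => k.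
    exact: (proj2_sig (constructive_indefinite_description _ (Ha k))).
  exists (@App sg n f ts) => /=; congr (op B f); apply: functional_extensionality; exact: Hts.
pose C := sub_alg HP.
pose g j : C := exist P (dB j) (ex_intro _ (@Var sg n j) erefl).
have evC : forall t, proj1_sig (eval C g t) = eval B dB t.
  by move=> t; rewrite eval_sub.
have fgC : fin_generated C.
  exists n, g => -[v [t e]]; exists t; apply: sig_eqP; by rewrite evC.
have qC : qvar A C.
  move=> m prem pq' satA c Hc.
  pose x j := rep (proj1_sig (c j)).
  have ec : forall t, proj1_sig (eval C c t) = cls U (fun i => eval A (fun j => x j i) t).
    move=> t; rewrite eval_sub -(eval_UP UUf x t); congr (eval B _ t).
    by apply: functional_extensionality => j; rewrite cls_rep.
  apply: sig_eqP; rewrite !ec; apply/(cls_eq UUf).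
  have H : forall y, List.In y prem ->
      U (fun i => eval A (fun j => x j i) y.1 = eval A (fun j => x j i) y.2).
    move=> y Hy; apply/(cls_eq UUf); rewrite -!ec; congr (@proj1_sig _ _); exact: Hc.
  apply: (US _ _ (@U_list I _ U UUf prem
     (fun y i => eval A (fun j => x j i) y.1 = eval A (fun j => x j i) y.2) H)).
  move=> i Hi; apply: satA => y Hy; exact: Hi.
move=> Heq.
have [pC _] := proj2 (Heq C) (conj qC fgC).
have KC := pC (Kq A) (Kq_prevariety A) (fun n S pq H => H).
have RC := KC n S pq RA g.
have E : eval C g pq.1 = eval C g pq.2.
  apply: RC => pq' Spq'; apply: sig_eqP; rewrite !evC; exact: HS.
by apply: Hpq; rewrite -!evC E.
Qed.
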